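(* Let $N\ge1$, let $X_1,\dots,X_N$ be the roots of the $N$-th Legendre polynomial transformed to $[0,1]$, and let $h_1,\dots,h_N$ be the associated Lagrange basis polynomials (a basis of $\mathsf{P}_{N-1}$, the real polynomials of degree at most $N-1$). Consider a closed sliding interface consisting of finitely many non-overlapping mortars $\Xi$, which together cover the interface, and finitely many cell faces on each of its two sides (left and right); each mortar is contained in exactly one left cell face and exactly one right cell face, and each cell face $\Omega$ is the union of the $m_\Omega\ge1$ mortars $\Xi_1,\dots,\Xi_{m_\Omega}$ contained in it. For each such face $\Omega$ and each of its mortars $\Xi_k$, let $s_k>0$ (with $\sum_k s_k=1$) be the ratio of the length of $\Xi_k$ to the length of $\Omega$ and $o_k=\sum_{\alpha<k}s_\alpha$, so that the face parameter $\xi\in[0,1]$ and the mortar parameter $z\in[0,1]$ are related by $\xi=o_k+s_kz$. Suppose each mortar $\Xi$ carries a single polynomial $\breve F^{\Xi}\in\mathsf{P}_{N-1}$ in $z$ (its common normal flux in mortar-space scaling), and for each cell face $\Omega$ (on either side) define $\widetilde F^{\Omega}\in\mathsf{P}_{N-1}$ in $\xi$ by $$\sum_{k=1}^{m_\Omega}\int_{o_k}^{o_k+s_k}\Big(\widetilde F^{\Omega}(\xi)-\tfrac{1}{s_k}\breve F^{\Xi_k}\big(\tfrac{\xi-o_k}{s_k}\big)\Big)h_j(\xi)\,d\xi=0\quad\text{for all }j=1,\dots,N.$$ Then for every cell face $\Omega$, $\int_0^1\widetilde F^{\Omega}(\xi)\,d\xi=\sum_{k=1}^{m_\Omega}\int_0^1\breve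 F^{\Xi_k}(z)\,dz$, and consequently $$\sum_{\Omega\ \text{left}}\int_0^1\widetilde F^{\Omega}(\xi)\,d\xi=\sum_{\Xi}\int_0^1\breve F^{\Xi}(z)\,dz=\sum_{\Omega\ \text{right}}\int_0^1\widetilde F^{\Omega}(\xi)\,d\xi,$$ i.e. the total flux on the left side of the sliding interface equals the total flux on the right side (global conservation across the interface).
   Context: This describes the back-projection of common fluxes from mortar elements to cell faces on a nonconforming sliding interface between two mesh subdomains in a high-order (flux reconstruction) discretization. The mortar-space flux $\breve F^{\Xi_k}$ is related to the computational-space flux on the mortar by $\widetilde F^{\Xi_k}=\breve F^{\Xi_k}/s_k$, which is the factor appearing in the defining relation; the same projection is used for both inviscid and viscous fluxes. *)

(* Defs.v *)
From HB Require Import structures.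
From mathcomp Require Import all_boot all_order all_algebra.
From mathcomp Require Import all_classical all_reals all_analysis.
Unset Printing Implicit Defensive.
Import Order.TTheory GRing.Theory Num.Theory.
Import numFieldNormedType.Exports.
Local Open Scope classical_set_scope.
Local Open Scope ring_scope.

Section Defs.
Variable R : realType.

Definition pint (p : {poly R}) (a b : R) : R :=
  \int[@lebesgue_measure R]_(x in `[a, b]) p.[x].

(* Legendre polynomials on [-1,1] via Bonnet's recurrence:
   P_0 = 1, P_1 = X, (n+2) P_{n+2} = (2n+3) X P_{n+1} - (n+1) P_n. *)
Fixpoint legendre_aux (n : nat) : {poly R} * {poly R} :=
  match n with
  | 0 => (1, 'X)
  | n'.+1 => let: (p, q) := legendre_aux n' in
             (q, (n'.+2)%:R^-1 *: ((2 * n' + 3)%:R *: ('X * q) - (n'.+1)%:R *: p))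
  end.
Definition legendre (n : nat) : {poly R} := (legendre_aux n).1.

Definition shifted_legendre (n : nat) : {poly R} :=
  legendre n \Po (2%:R *: 'X - 1).

Definition lagrange_basis (N : nat) (X : 'I_N -> R) (j : 'I_N) : {poly R} :=
  \prod_(i < N | i != j) ((X j - X i)^-1 *: ('X - (X i)%:P)).

(* A cell face is described by the ordered list ms of the mortars it contains
   (Xi_1, ..., Xi_m); len gives the mortar lengths. *)
Section Face.
Variable M : finType.
Variables (len : M -> R) (ms : seq M).

Definition face_len : R := \sum_(x <- ms) len x.
Definition face_mortar (k : 'I_(size ms)) : M := tnth (in_tuple ms) k.
Definition face_s (k : 'I_(size ms)) : R := len (face_mortar k) / face_len.
Definition face_o (k : 'I_(size ms)) : R :=
  \sum_(a < size ms | (a < k)%N) face_s a.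
End Face.

Definition is_face_projection (M : finType) (N : nat) (X : 'I_N -> R)
  (len : M -> R) (Fb : M -> {poly R}) (ms : seq M) (Ft : {poly R}) : Prop :=
  forall j : 'I_N,
    \sum_(k < size ms)
      pint ((Ft - (face_s M len ms k)^-1 *:
               (Fb (face_mortar M ms k) \Po
                  ((face_s M len ms k)^-1 *: ('X - (face_o M len ms k)%:P))))
            * lagrange_basis N X j)
           (face_o M len ms k) (face_o M len ms k + face_s M len ms k) = 0.

End Defs.
Arguments face_len {R M} len ms.
Arguments face_mortar {M} ms k.
Arguments face_s {R M} len ms k.
Arguments face_o {R M} len ms k.
Arguments lagrange_basis {R N} X j.
Arguments is_face_projection {R M N} X len Fb ms Ft.
Arguments pint {R} p a b.

(* Main.v *)
Require Import Defs.
From HB Require Import structures.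
From mathcomp Require Import all_boot all_order all_algebra.
From mathcomp Require Import all_classical all_reals all_analysis.
From mathcomp Require Import ring lra zify.
Import Order.TTheory GRing.Theory Num.Theory.
Import numFieldNormedType.Exports.
Local Open Scope ring_scope.

Lemma pint_ftc (R : realType) (p Q : {poly R}) a b : a < b -> Q^`() = p ->
  pint p a b = Q.[b] - Q.[a].
Proof.
move=> ab dQ; rewrite /pint.
have := @continuous_FTC2 R (horner p) (horner Q) a b ab.
rewrite /Rintegral => ->.
- by [].
- by apply: continuous_subspaceT; exact: continuous_horner.
- split.
  + by move=> x _; exact: derivable_horner.
  + exact/cvg_at_right_filter/continuous_horner.
  + exact/cvg_at_left_filter/continuous_horner.
- by move=> x _; rewrite -derivE dQ.
Qed.

Definition prim {R : realType} (p : {poly R}) : {poly R} :=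
  \poly_(i < (size p).+1) (if i is k.+1 then p`_k / k.+1%:R else 0).

Lemma primP (R : realType) (p : {poly R}) : (prim p)^`() = p.
Proof.
apply/polyP => i; rewrite coef_deriv coef_poly.
case: ltnP => H.
  by rewrite -[LHS]mulr_natr -mulrA mulVf ?mulr1 // pnatr_eq0.
by rewrite mul0rn nth_default.
Qed.

Lemma pint_prim (R : realType) (p : {poly R}) a b : a < b ->
  pint p a b = (prim p).[b] - (prim p).[a].
Proof. by move=> ab; apply: pint_ftc => //; exact: primP. Qed.

Lemma pintD (R : realType) (p q : {poly R}) a b : a < b ->
  pint (p + q) a b = pint p a b + pint q a b.
Proof.
move=> ab; rewrite (@pint_ftc _ _ (prim p + prim q)) // ?derivD ?primP //.
rewrite !pint_prim // !hornerD; lra.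
Qed.

Lemma pintZ (R : realType) (c : R) (q : {poly R}) a b : a < b ->
  pint (c *: q) a b = c * pint q a b.
Proof.
move=> ab; rewrite (@pint_ftc _ _ (c *: prim q)) // ?derivZ ?primP //.
rewrite !pint_prim // !hornerZ; lra.
Qed.

Lemma pintB (R : realType) (p q : {poly R}) a b : a < b ->
  pint (p - q) a b = pint p a b - pint q a b.
Proof.
move=> ab; rewrite pintD // -scaleN1r pintZ //; lra.
Qed.

Lemma pint_sum (R : realType) (I : Type) (r : seq I) (F : I -> {poly R}) a b :
  a < b -> pint (\sum_(i <- r) F i) a b = \sum_(i <- r) pint (F i) a b.
Proof.
move=> ab; elim: r => [|x r IH]; first by rewrite !big_nil -(scale0r 0) pintZ // mul0r.
by rewrite !big_cons pintD // IH.
Qed.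

Lemma pint_comp (R : realType) (p : {poly R}) (s o : R) : 0 < s ->
  pint (s^-1 *: (p \Po (s^-1 *: ('X - o%:P)))) o (o + s) = pint p 0 1.
Proof.
move=> s0.
rewrite (@pint_ftc _ _ (prim p \Po (s^-1 *: ('X - o%:P)))); last first.
- rewrite deriv_comp primP derivZ derivB derivX derivC subr0.
  by rewrite mulrC -scalerAl mul1r.
- by rewrite ltrDl.
rewrite pint_prim ?ltr01 // !horner_comp !hornerZ !hornerD !hornerN hornerX hornerC.
by rewrite hornerX hornerC subrr mulr0 addrAC subrr add0r mulVf // gt_eqF.
Qed.

Lemma lagrange_size (R : realType) N (X : 'I_N -> R) j :
  injective X -> (size (lagrange_basis X j) <= N)%N.
Proof.
move=> Xi; rewrite /lagrange_basis scaler_prod.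
apply: (leq_trans (size_scale_leq _ _)).
rewrite size_prod; last by move=> i _; rewrite polyXsubC_eq0.
under eq_bigr do rewrite size_XsubC.
rewrite sum_nat_const.
have -> : #|[pred i | i != j]| = N.-1 by rewrite -[in RHS](card_ord N) -(cardC1 j); apply: eq_card => k; rewrite !inE.
case: N X j Xi => [|n] X j Xi /=; first by case: j.
lia.
Qed.

Lemma lagrange_eval (R : realType) N (X : 'I_N -> R) j i :
  injective X -> (lagrange_basis X j).[X i] = (i == j)%:R.
Proof.
move=> Xi; rewrite /lagrange_basis horner_prod.
have [->|nij] := eqVneq i j.
  apply: big1 => k kj; rewrite hornerZ hornerXsubC mulVf // subr_eq0.
  by apply/eqP => /Xi /eqP; rewrite eq_sym (negPf kj).
rewrite (bigD1 i) //= hornerZ hornerXsubC subrr mulr0 mul0r //.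
Qed.

Lemma lagrange_sum (R : realType) N (X : 'I_N -> R) :
  (0 < N)%N -> injective X -> \sum_(j < N) lagrange_basis X j = 1.
Proof.
move=> N0 Xi; apply/eqP; rewrite -subr_eq0; apply/eqP.
set S := _ - 1.
have sS : (size S <= N)%N.
  rewrite /S; apply: (leq_trans (size_polyD _ _)); rewrite geq_max; apply/andP; split.
    apply: (big_ind (fun p : {poly R} => (size p <= N)%N)).
    - by rewrite size_poly0.
    - by move=> p q Hp Hq; apply: (leq_trans (size_polyD _ _)); rewrite geq_max Hp Hq.
    - by move=> k _; apply: lagrange_size.
  by rewrite size_polyN size_poly1.
apply/eqP; apply: contraT => S0.
have := max_poly_roots S0 (rs := map X (enum 'I_N)).
rewrite size_map size_enum_ord (map_inj_uniq Xi) ?enum_uniq.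
rewrite ltnNge sS; apply => //.
apply/allP => _ /mapP [i _ ->].
rewrite /root /S hornerD hornerN hornerC horner_sum.
rewrite (bigD1 i) //= lagrange_eval // eqxx big1 ?addr0 ?subrr //.
by move=> k ki; rewrite lagrange_eval // eq_sym (negPf ki).
Qed.

Lemma face_main (R : realType) N (X : 'I_N -> R) (M : finType) (len : M -> R)
  (Fb : M -> {poly R}) (ms : seq M) (Ft : {poly R}) :
  (0 < N)%N -> injective X -> (forall x, 0 < len x) -> (0 < size ms)%N ->
  is_face_projection X len Fb ms Ft ->
  pint Ft 0 1 = \sum_(k < size ms) pint (Fb (face_mortar ms k)) 0 1.
Proof.
move=> N0 Xi lpos nms proj.
set n := size ms.
have Lpos : 0 < face_len len ms.
  rewrite /face_len; case: ms nms {proj n} => [//|x s] _.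
  rewrite big_cons; have := lpos x; have : 0 <= \sum_(y <- s) len y.
    by apply: sumr_ge0 => y _; apply: ltW.
  lra.
have spos k : 0 < face_s len ms k by apply: divr_gt0.
pose g m := \sum_(a < n | (a < m)%N) face_s len ms a.
have gS (k : 'I_n) : face_o len ms k + face_s len ms k = g k.+1.
  rewrite /g (bigD1 k) //= addrC; congr (_ + _).
  by apply: eq_bigl => a; rewrite ltnS ltn_neqAle andbC.
have g0 : g 0%N = 0 by apply: big1 => a; rewrite ltn0.
have gn : g n = 1.
  rewrite /g (eq_bigl xpredT) => [|a]; last by rewrite ltn_ord.
  rewrite /face_s -mulr_suml.
  have -> : \sum_(a < n) len (face_mortar ms a) = face_len len ms.
    by rewrite /face_len [RHS]big_tnth.
  by rewrite divff // gt_eqF.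
have ab (k : 'I_n) : face_o len ms k < face_o len ms k + face_s len ms k.
  by rewrite ltrDl.
have : \sum_(j < N) \sum_(k < n) pint ((Ft - (face_s len ms k)^-1 *:
   (Fb (face_mortar ms k) \Po ((face_s len ms k)^-1 *: ('X - (face_o len ms k)%:P))))
   * lagrange_basis X j) (face_o len ms k) (face_o len ms k + face_s len ms k) = 0.
  by apply: big1 => j _; exact: proj j.
rewrite exchange_big /=.
under eq_bigr => k _ do rewrite -pint_sum // -mulr_sumr lagrange_sum // mulr1
  pintB // pint_comp //.
rewrite sumrB => /eqP; rewrite subr_eq0 => /eqP <-.
under eq_bigr => k _ do rewrite pint_prim // gS.
have -> : \sum_(k < n) ((prim Ft).[g k.+1] - (prim Ft).[face_o len ms k]) =
          \sum_(k < n) ((prim Ft).[g k.+1] - (prim Ft).[g k]) by [].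
rewrite -(big_mkord xpredT (fun k => (prim Ft).[g k.+1] - (prim Ft).[g k])).
rewrite (telescope_sumr (fun k => (prim Ft).[g k])) // gn g0 pint_prim //.
Qed.

Lemma sum_seq_count (R : realType) (M : finType) (f : M -> R) (s : seq M) :
  \sum_(x <- s) f x = \sum_(x : M) (count_mem x s)%:R * f x.
Proof.
elim: s => [|a s IH].
  by rewrite big_nil big1 // => x _; rewrite mul0r.
rewrite big_cons IH /=.
under [RHS]eq_bigr do rewrite natrD mulrDl.
rewrite big_split /=; congr (_ + _).
rewrite (bigD1 a) //= eqxx mul1r big1 ?addr0 // => x xa.
by rewrite eq_sym (negPf xa) mul0r.
Qed.

Lemma total_sum (R : realType) (M W : finType) (m : W -> seq M) (f : M -> R) :
  (forall x : M, \sum_(w : W) count_mem x (m w) = 1%N) ->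
  \sum_(w : W) \sum_(k < size (m w)) f (face_mortar (m w) k) = \sum_(x : M) f x.
Proof.
move=> H.
under eq_bigr => w _ do rewrite -(big_tnth _ _ _ xpredT f) sum_seq_count.
rewrite exchange_big /=; apply: eq_bigr => x _.
by rewrite -mulr_suml -natr_sum H mul1r.
Qed.

Theorem mainTheorem2 (R : realType) (N : nat) (X : 'I_N -> R)
  (M Lf Rf : finType) (len : M -> R)
  (mL : Lf -> seq M) (mR : Rf -> seq M)
  (Fb : M -> {poly R}) (FtL : Lf -> {poly R}) (FtR : Rf -> {poly R}) :
  (1 <= N)%N ->
  injective X ->
  (forall i, root (shifted_legendre R N) (X i)) ->
  (forall x : M, 0 < len x) ->
  (forall w : Lf, (1 <= size (mL w))%N) ->
  (forall w : Rf, (1 <= size (mR w))%N) ->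
  (forall x : M, \sum_(w : Lf) count_mem x (mL w) = 1%N) ->
  (forall x : M, \sum_(w : Rf) count_mem x (mR w) = 1%N) ->
  (forall x : M, (size (Fb x) <= N)%N) ->
  (forall w : Lf, (size (FtL w) <= N)%N) ->
  (forall w : Rf, (size (FtR w) <= N)%N) ->
  (forall w : Lf, is_face_projection X len Fb (mL w) (FtL w)) ->
  (forall w : Rf, is_face_projection X len Fb (mR w) (FtR w)) ->
  (forall w : Lf, pint (FtL w) 0 1 =
       \sum_(k < size (mL w)) pint (Fb (face_mortar (mL w) k)) 0 1) /\
  (forall w : Rf, pint (FtR w) 0 1 =
       \sum_(k < size (mR w)) pint (Fb (face_mortar (mR w) k)) 0 1) /\
  (\sum_(w : Lf) pint (FtL w) 0 1 = \sum_(x : M) pint (Fb x) 0 1) /\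
  (\sum_(x : M) pint (Fb x) 0 1 = \sum_(w : Rf) pint (FtR w) 0 1).
Proof.
move=> N1 Xi _ lpos sL sR cL cR _ _ _ pL pR.
have hL : forall w : Lf, pint (FtL w) 0 1 =
       \sum_(k < size (mL w)) pint (Fb (face_mortar (mL w) k)) 0 1.
  by move=> w; exact: (face_main _ _ _ _ _ _ _ _ N1 Xi lpos (sL w) (pL w)).
have hR : forall w : Rf, pint (FtR w) 0 1 =
       \sum_(k < size (mR w)) pint (Fb (face_mortar (mR w) k)) 0 1.
  by move=> w; exact: (face_main _ _ _ _ _ _ _ _ N1 Xi lpos (sR w) (pR w)).
split => //; split => //; split.
  under eq_bigr do rewrite hL.
  exact: (total_sum _ _ _ _ (fun x => pint (Fb x) 0 1) cL).
under [RHS]eq_bigr do rewrite hR.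
by rewrite (total_sum _ _ _ _ (fun x => pint (Fb x) 0 1) cR).
Qed.
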